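(* Let $n\in\mathbb{N}^*$. Then, almost surely, $$\sup_{f}\ \Big|\mathbb{E}\big[f(Z)\mid\overline Z^{1:\infty}\big]-\mathbb{E}_{\overline Z^n}(f)\Big| \;=\;\sup_{f\in\mathcal L,\ \|f\|_{\mathcal L}\le1}\Big|\mathbb{E}[f(Z)]-\mathbb{E}_{\overline Z^n}(f)\Big|,$$ where the supremum on the left is over all $\overline Z^{1:\infty}$-measurable random functions $f$ such that $\|f\|_{\mathcal L}\le1$ almost surely.
   Context: $Z$ is an $\mathbb{R}^d$-valued random vector with law $\nu$. $\mathcal L$ denotes the Lipschitz functions $\mathbb{R}^d\to\mathbb{R}$ and $\|f\|_{\mathcal L}$ the Lipschitz constant. $(M_n)_{n\ge1}$ are positive integers; $\overline Z^n=(Z^n_k)_{1\le k\le M_n}$ where all $Z^n_k$ ($n\ge1$, $1\le k\le M_n$) are i.i.d. with law $\nu$ and independent of $Z$; $\overline Z^{1:\infty}=(\overline Z^n)_{n\ge1}$. For a collection $\overline Z=(Z_k)_{k\le M}$, $\mathbb{E}_{\overline Z}(f)=\frac1M\sum_{k=1}^Mf(Z_k)$. *)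

(* Defs.v *)
From HB Require Import structures.
From mathcomp Require Import all_boot all_order all_algebra.
From mathcomp Require Import all_classical all_reals all_analysis.
Set Implicit Arguments. Unset Strict Implicit. Unset Printing Implicit Defensive.
Import Order.TTheory GRing.Theory Num.Theory.
Local Open Scope classical_set_scope.
Local Open Scope ring_scope.

Section Defs.
Context {R : realType} {dT : measure_display} {Omega : measurableType dT}.
Context {d : nat}.

Definition enorm (x : 'rV[R]_d) : R := Num.sqrt (\sum_(j < d) x ord0 j ^+ 2).

(* f in L with ||f||_L <= 1, i.e. f is 1-Lipschitz for the Euclidean norm *)
Definition lip1 (f : 'rV[R]_d -> R) : Prop :=
  forall x y, `|f x - f y| <= enorm (x - y).

(* Borel sigma-algebra of R^d (= product sigma-algebra, generated by coordinates) *)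
Definition borel_rV : set (set 'rV[R]_d) :=
  <<s [set E | exists (j : 'I_d) (B : set R),
        measurable B /\ E = (fun x : 'rV[R]_d => x ord0 j) @^-1` B] >>.

Definition random_vec (X : Omega -> 'rV[R]_d) : Prop :=
  forall j : 'I_d, measurable_fun setT (fun w => X w ord0 j).

Definition sigmaX (X : Omega -> 'rV[R]_d) : set (set Omega) :=
  [set E | exists2 A, borel_rV A & E = X @^-1` A].

Definition mutual_indep {J : eqType} (P : probability Omega R)
  (F : J -> set (set Omega)) (I : set J) : Prop :=
  forall (s : seq J) (A : J -> set Omega), uniq s -> {subset s <= I} ->
    (forall j, j \in s -> F j (A j)) ->
    P (\big[setI/setT]_(j <- s) A j) = (\prod_(j <- s) P (A j))%E.

Definition meas_wrt (G : set (set Omega)) (Y : Omega -> R) : Prop :=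
  forall B : set R, measurable B -> G (Y @^-1` B).

Definition cond_exp_version (P : probability Omega R) (G : set (set Omega))
  (X Y : Omega -> R) : Prop :=
  [/\ P.-integrable setT (EFin \o X), meas_wrt G Y,
      P.-integrable setT (EFin \o Y) &
      forall A, G A -> (\int[P]_(w in A) (Y w)%:E = \int[P]_(w in A) (X w)%:E)%E].

Definition prod_sigma (G : set (set Omega)) : set (set (Omega * 'rV[R]_d)) :=
  <<s [set E | exists A B, [/\ G A, borel_rV B & E = A `*` B]] >>.

Definition admissible_rf (P : probability Omega R) (G : set (set Omega))
  (f : Omega -> 'rV[R]_d -> R) : Prop :=
  (forall B : set R, measurable B ->
     prod_sigma G ((fun p => f p.1 p.2) @^-1` B)) /\
  {ae P, forall w, lip1 (f w)}.

Definition emp_mean (M : nat -> nat) (Zs : nat -> nat -> Omega -> 'rV[R]_d) (n : nat)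
  (f : Omega -> 'rV[R]_d -> R) (w : Omega) : R :=
  (M n)%:R^-1 * \sum_(k < M n) f w (Zs n k w).

Definition valid_idx (M : nat -> nat) : set (option (nat * nat)) :=
  [set i | match i with None => True
           | Some (m, k) => (0 < m)%N /\ (k < M m)%N end].

Definition zfamily (Z : Omega -> 'rV[R]_d) (Zs : nat -> nat -> Omega -> 'rV[R]_d)
  (i : option (nat * nat)) : set (set Omega) :=
  match i with None => sigmaX Z | Some (m, k) => sigmaX (Zs m k) end.

Definition sigma_all (M : nat -> nat) (Zs : nat -> nat -> Omega -> 'rV[R]_d)
  : set (set Omega) :=
  <<s \bigcup_(i in [set mk : nat * nat | (0 < mk.1)%N /\ (mk.2 < M mk.1)%N])
        sigmaX (Zs i.1 i.2) >>.

Definition is_ess_sup (P : probability Omega R) (Xs : set (Omega -> \bar R))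
  (D : Omega -> \bar R) : Prop :=
  (forall X, Xs X -> {ae P, forall w, (X w <= D w)%E}) /\
  (forall U : Omega -> \bar R,
     (forall X, Xs X -> {ae P, forall w, (X w <= U w)%E}) ->
     {ae P, forall w, (D w <= U w)%E}).

End Defs.

(* Main.v *)
Require Import Defs.
From HB Require Import structures.
From mathcomp Require Import all_boot all_order all_algebra.
From mathcomp Require Import all_classical all_reals all_analysis.
From mathcomp Require Import ring lra measurable_realfun.
Import Order.TTheory GRing.Theory Num.Theory.
Import numFieldNormedType.Exports.
Local Open Scope classical_set_scope.
Local Open Scope ring_scope.
Section enorm_lemmas.
Context {R : realType} {d : nat}.

Lemma enorm_ge0 (x : 'rV[R]_d) : 0 <= enorm x.
Proof. exact: sqrtr_ge0. Qed.

Lemma sumsq_ge0 (a : 'I_d -> R) : 0 <= \sum_j a j ^+ 2.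
Proof. by apply: sumr_ge0 => j _; exact: sqr_ge0. Qed.

Lemma enorm_sq (x : 'rV[R]_d) : enorm x ^+ 2 = \sum_(j < d) x ord0 j ^+ 2.
Proof. by rewrite /enorm sqr_sqrtr // sumsq_ge0. Qed.

Lemma enormN (x : 'rV[R]_d) : enorm (- x) = enorm x.
Proof. by rewrite /enorm; congr Num.sqrt; apply: eq_bigr => j _; rewrite mxE sqrrN. Qed.

Lemma enormB (x y : 'rV[R]_d) : enorm (x - y) = enorm (y - x).
Proof. by rewrite -enormN opprB. Qed.

Lemma cs_expand (a b : 'I_d -> R) (A C : R) :
  \sum_j (A * b j - C * a j) ^+ 2 =
  A ^+ 2 * (\sum_j b j ^+ 2) - 2 * A * C * (\sum_j a j * b j) + C ^+ 2 * (\sum_j a j ^+ 2).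
Proof.
rewrite !mulr_sumr -sumrB -big_split /=; apply: eq_bigr => j _; ring.
Qed.

Lemma cauchy_schwarz (a b : 'I_d -> R) :
  (\sum_j a j * b j) ^+ 2 <= (\sum_j a j ^+ 2) * (\sum_j b j ^+ 2).
Proof.
set A := \sum_j a j ^+ 2; set B := \sum_j b j ^+ 2; set C := \sum_j a j * b j.
have A0 : 0 <= A by exact: sumsq_ge0.
have B0 : 0 <= B by exact: sumsq_ge0.
have [A0e|Apos] := eqVneq A 0.
  have a0 := psumr_eq0P (fun j _ => sqr_ge0 (a j)) A0e.
  rewrite /C big1 ?expr0n ?mulr_ge0 //= => j _.
  by move: (a0 j isT) => /eqP; rewrite sqrf_eq0 => /eqP ->; rewrite mul0r.
have Ap : 0 < A by rewrite lt0r Apos A0.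
have H := cs_expand a b A C; rewrite -/A -/B -/C in H.
have : 0 <= A ^+ 2 * B - 2 * A * C * C + C ^+ 2 * A by rewrite -H sumsq_ge0.
have -> : A ^+ 2 * B - 2 * A * C * C + C ^+ 2 * A = A * (A * B - C ^+ 2) by ring.
by rewrite pmulr_rge0 // subr_ge0.
Qed.

Lemma enorm_triangle (x y : 'rV[R]_d) : enorm (x + y) <= enorm x + enorm y.
Proof.
rewrite -(@ler_pXn2r _ 2) ?nnegrE ?addr_ge0 ?enorm_ge0 //.
have E : enorm (x + y) ^+ 2 =
  enorm x ^+ 2 + 2 * \sum_j (x ord0 j * y ord0 j) + enorm y ^+ 2.
  rewrite !enorm_sq mulr_sumr -!big_split /=; apply: eq_bigr => j _; rewrite mxE; ring.
have CS : (\sum_j (x ord0 j * y ord0 j)) ^+ 2 <= (enorm x * enorm y) ^+ 2.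
  by rewrite exprMn !enorm_sq; exact: cauchy_schwarz.
have ex0 := enorm_ge0 x; have ey0 := enorm_ge0 y.
rewrite E; move: CS; set C := \sum_j _; set a := enorm x; set b := enorm y => CS.
have ab0 : 0 <= a * b by exact: mulr_ge0.
have Cle : C <= a * b.
  rewrite leNgt; apply/negP => Cgt.
  have : (a * b) ^+ 2 < C ^+ 2 by rewrite ltr_pXn2r ?nnegrE //; apply: le_trans (ltW Cgt).
  by rewrite ltNge CS.
have -> : (a + b) ^+ 2 = a ^+ 2 + 2 * (a * b) + b ^+ 2 by ring.
lra.
Qed.

Lemma enorm_lip (z z' q : 'rV[R]_d) : `|enorm (z - q) - enorm (z' - q)| <= enorm (z - z').
Proof.
have h1 : enorm (z - q) <= enorm (z - z') + enorm (z' - q).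
  have -> : z - q = (z - z') + (z' - q) by rewrite addrA subrK.
  exact: enorm_triangle.
have h2 : enorm (z' - q) <= enorm (z - z') + enorm (z - q).
  have -> : z' - q = (z' - z) + (z - q) by rewrite addrA subrK.
  by rewrite (enormB z); exact: enorm_triangle.
rewrite ler_norml; apply/andP; split; lra.
Qed.
End enorm_lemmas.
Section approx.
Context {R : realType} {d : nat}.

Lemma rat_approx (r e : R) : 0 < e -> exists c : rat, `|r - ratr c| < e.
Proof.
move=> e0.
have := @dense_rat R (ball r e) _ (@ball_open _ _ r e).
case. by exists r; exact: ballxx.
move=> y [/= bry [c _ cy]]; exists c; rewrite cy.
by move: bry; rewrite -ball_normE.
Qed.

Definition qr (q : 'rV[rat]_d) : 'rV[R]_d := map_mx ratr q.

Lemma vec_approx (x : 'rV[R]_d) (e : R) : 0 < e ->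
  exists q : 'rV[rat]_d, enorm (x - qr q) < e.
Proof.
move=> e0.
pose D : R := d%:R + 1.
have D0 : 0 < D by rewrite /D ltr_pwDr.
pose eps := e / D.
have eps0 : 0 < eps by rewrite divr_gt0.
have /choice [cf Hc] : forall j : 'I_d, exists c : rat, `|x ord0 j - ratr c| < eps.
  by move=> j; exact: rat_approx.
exists (\row_j cf j).
rewrite -(@ltr_pXn2r _ 2) ?nnegrE ?enorm_ge0 ?ltW // enorm_sq.
apply: (@le_lt_trans _ _ (\sum_(j < d) eps ^+ 2)).
  apply: ler_sum => j _; rewrite !mxE.
  move: (Hc j); rewrite ltr_norml => /andP[h1 h2]; nra.
rewrite sumr_const card_ord -mulr_natl.
have dD : d%:R < D ^+ 2.
  rewrite /D; have : (0 : R) <= d%:R by [].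
  nra.
have -> : d%:R * eps ^+ 2 = e ^+ 2 * (d%:R / D ^+ 2).
  by rewrite /eps; field; rewrite gt_eqF.
rewrite gtr_pMr ?exprn_gt0 //.
by rewrite ltr_pdivrMr ?exprn_gt0 // mul1r.
Qed.
End approx.
Section family.
Context {R : realType} {d : nat}.
Local Notation qr := (@qr R d).

Definition Idx := ('rV[rat]_d * rat * seq ('rV[rat]_d * rat))%type.

Definition term (p : 'rV[rat]_d * rat) (z : 'rV[R]_d) : R :=
  ratr p.2 + enorm (z - qr p.1).

Definition gfam (i : Idx) (z : 'rV[R]_d) : R :=
  foldr (fun p acc => Num.min (term p z) acc) (term i.1 z) i.2.

Lemma min_lip (a b a' b' e : R) : `|a - a'| <= e -> `|b - b'| <= e ->
  `|Num.min a b - Num.min a' b'| <= e.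
Proof.
rewrite !ler_norml => /andP[h1 h2] /andP[h3 h4].
have H1 : Num.min a b <= Num.min a' b' + e.
  rewrite -lerBlDr le_min; apply/andP; split; rewrite lerBlDr.
    by rewrite ge_min; apply/orP; left; lra.
  by rewrite ge_min; apply/orP; right; lra.
have H2 : Num.min a' b' <= Num.min a b + e.
  rewrite -lerBlDr le_min; apply/andP; split; rewrite lerBlDr.
    by rewrite ge_min; apply/orP; left; lra.
  by rewrite ge_min; apply/orP; right; lra.
apply/andP; split; lra.
Qed.

Lemma term_lip p : lip1 (term p).
Proof.
move=> z z'; rewrite /term.
have -> : ratr p.2 + enorm (z - qr p.1) - (ratr p.2 + enorm (z' - qr p.1)) =
  enorm (z - qr p.1) - enorm (z' - qr p.1) by ring.
exact: enorm_lip.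
Qed.

Lemma gfam_lip i : lip1 (gfam i).
Proof.
case: i => p0 s; rewrite /gfam /=; elim: s => [|p s IH] /=.
  exact: term_lip.
by move=> z z'; apply: min_lip; [exact: term_lip|exact: IH].
Qed.

Lemma gfam_lb i z (lb : R) : lb <= term i.1 z ->
  (forall p, p \in i.2 -> lb <= term p z) -> lb <= gfam i z.
Proof.
case: i => p0 s /=; rewrite /gfam /= => h0; elim: s => [|p s IH] //= hs.
rewrite le_min (hs p (mem_head _ _)) /=; apply: IH => q qs.
by apply: hs; rewrite in_cons qs orbT.
Qed.

Lemma gfam_ub i z p : p \in i.2 -> gfam i z <= term p z.
Proof.
case: i => p0 s /=; rewrite /gfam /=; elim: s => [//|q s IH] /=.
rewrite in_cons => /orP[/eqP ->|ps]; rewrite ge_min ?lexx //.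
by rewrite IH ?orbT.
Qed.
End family.
Section approx_family.
Context {R : realType} {d : nat}.

Lemma lip1_le (g : 'rV[R]_d -> R) z y : lip1 g -> g z <= g y + enorm (z - y).
Proof. move=> /(_ z y); rewrite ler_norml => /andP[_ h]; lra. Qed.

Lemma family_approx (g : 'rV[R]_d -> R) (m : nat) (x : 'I_m -> 'rV[R]_d) (e : R) :
  lip1 g -> (0 < m)%N -> 0 < e ->
  exists i : @Idx d, (forall z, g z - e <= gfam i z) /\
                     (forall k, gfam i (x k) <= g (x k) + 3 * e).
Proof.
move=> lg m0 e0.
have /choice [qf Hq] : forall k : 'I_m, exists q, enorm (x k - qr q) < e.
  by move=> k; exact: vec_approx.
have /choice [cf Hc] : forall k : 'I_m, exists c : rat, `|g (qr (qf k)) - ratr c| < e.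
  by move=> k; exact: rat_approx.
pose k0 : 'I_m := Ordinal m0.
have key : forall z k, g z - e <= term (qf k, cf k) z.
  move=> z k; rewrite /term /=.
  have := @lip1_le g z (qr (qf k)) lg; move: (Hc k); rewrite ltr_norml => /andP[h1 h2].
  lra.
exists ((qf k0, cf k0), [seq (qf k, cf k) | k <- enum 'I_m]); split.
- move=> z; apply: gfam_lb => [|p /mapP [k _ ->]]; exact: key.
- move=> k.
  have hk : (qf k, cf k) \in [seq (qf k, cf k) | k <- enum 'I_m].
    by apply/mapP; exists k => //; rewrite mem_enum.
  apply: le_trans (gfam_ub ((qf k0, cf k0), _) (x k) _ hk) _.
  rewrite /term /=.
  have := @lip1_le g (qr (qf k)) (x k) lg; move: (Hc k) (Hq k).
  rewrite ltr_norml enormB => /andP[h1 h2] h3; lra.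
Qed.
End approx_family.
Section rVp_def.
Context {R : realType} {d : nat}.
Definition rVp : Type := 'rV[R]_d.
HB.instance Definition _ := Choice.copy rVp 'rV[R]_d.
HB.instance Definition _ := isPointed.Build rVp 0.
Definition BGen : set (set rVp) := [set E | exists (j : 'I_d) (B : set R),
        measurable B /\ E = (fun x : 'rV[R]_d => x ord0 j) @^-1` B].
Definition RB := @g_sigma_algebraType rVp BGen.
End rVp_def.

Section RB_meas.
Context {R : realType} {d : nat}.
Local Notation RB := (@RB R d).

Lemma RB_measurableE : @measurable _ RB = @borel_rV R d.
Proof. by []. Qed.

Lemma coord_meas (j : 'I_d) : measurable_fun [set: RB] (fun x : RB => (x : 'rV[R]_d) ord0 j).
Proof.
move=> _ B mB; rewrite setTI; apply: sub_sigma_algebra; by exists j, B.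
Qed.

Lemma enorm_shift_meas (v : 'rV[R]_d) : measurable_fun [set: RB] (fun x : RB => enorm ((x : 'rV[R]_d) - v)).
Proof.
rewrite (_ : (fun x : RB => enorm ((x : 'rV[R]_d) - v)) =
  Num.sqrt \o (fun x : RB => \sum_(j < d) ((x : 'rV[R]_d) - v) ord0 j ^+ 2)) //.
apply: measurableT_comp; first exact: continuous_measurable_fun (@sqrt_continuous R).
apply: measurable_sum => j /=.
under eq_fun do rewrite !mxE.
apply: measurable_funX.
apply: measurable_funB; [exact: coord_meas|exact: measurable_cst].
Qed.

Lemma term_meas p : measurable_fun [set: RB] (fun x : RB => term p x).
Proof.
by apply: measurable_funD; [exact: measurable_cst|exact: enorm_shift_meas].
Qed.

Lemma gfam_meas i : measurable_fun [set: RB] (fun x : RB => gfam i x).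
Proof.
case: i => p0 s; rewrite /gfam /=; elim: s => [|p s IH] /=; first exact: term_meas.
exact: measurable_minr (term_meas p) IH.
Qed.

Lemma lip1_meas (g : 'rV[R]_d -> R) : lip1 g -> measurable_fun [set: RB] (g : RB -> R).
Proof.
move=> lg; apply: (measurability _ (RGenInftyO.measurableE R)) => //.
move=> _ [_ [a ->] <-].
pose F n : set RB := match unpickle n with
  | Some q => (fun z : RB => g (qr q) + enorm ((z : 'rV[R]_d) - qr q)) @^-1` `]-oo, a[
  | None => set0 end.
have -> : [set: RB] `&` g @^-1` `]-oo, a[ = \bigcup_n F n.
  apply/seteqP; split.
  - move=> z [_ /=]; rewrite in_itv /= => gza.
    have : 0 < (a - g z) / 2 by rewrite divr_gt0 // subr_gt0.
    move=> /(vec_approx z) [q Hq].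
    exists (pickle q) => //; rewrite /F pickleK /= in_itv /=.
    have := @lip1_le _ _ g (qr q) z lg; rewrite enormB; lra.
  - move=> z [n _]; rewrite /F; case: (unpickle n) => [q|//] /=.
    rewrite !in_itv /= => h; split => //.
    have := @lip1_le _ _ g z (qr q) lg; lra.
apply: bigcupT_measurable => n; rewrite /F; case: (unpickle n) => [q|//].
rewrite -[X in measurable X]setTI.
by apply: (measurable_funD (measurable_cst _) (enorm_shift_meas _)) => //.
Qed.
End RB_meas.
Section main.
Context {R : realType} {dT : measure_display} {Omega : measurableType dT}.
Variable P : probability Omega R.
Context {d : nat}.
Variables (M : nat -> nat) (Z : Omega -> 'rV[R]_d) (Zs : nat -> nat -> Omega -> 'rV[R]_d).
Hypothesis HM : forall m, (0 < M m)%N.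
Hypothesis HZ : random_vec Z.
Hypothesis HZs : forall m k, (0 < m)%N -> (k < M m)%N -> random_vec (Zs m k).
Hypothesis Hind : mutual_indep P (zfamily Z Zs) (valid_idx M).

Local Notation RB := (@RB R d).

Lemma RB_mE : @measurable _ RB = <<s (@BGen R d) >>. Proof. by []. Qed.

Lemma rv_meas (X : Omega -> 'rV[R]_d) : random_vec X -> measurable_fun [set: Omega] (X : Omega -> RB).
Proof.
move=> hX; apply: (measurability _ RB_mE) => //.
by move=> _ [_ [j [B [mB ->]]] <-]; exact: (hX j measurableT B mB).
Qed.

Lemma sigmaX_meas (X : Omega -> 'rV[R]_d) E : random_vec X -> sigmaX X E -> measurable E.
Proof.
move=> hX [A bA ->]; rewrite -[X in measurable X]setTI.
exact: (rv_meas X hX measurableT A bA).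
Qed.

Definition Gen : set (set Omega) := \bigcup_(i in [set mk : nat * nat | (0 < mk.1)%N /\ (mk.2 < M mk.1)%N])
        sigmaX (Zs i.1 i.2).
Definition OG := @g_sigma_algebraType Omega Gen.
Lemma OG_mE : @measurable _ OG = sigma_all M Zs. Proof. by []. Qed.
Lemma OG_mE' : @measurable _ OG = <<s Gen >>. Proof. by []. Qed.

Definition idG (w : Omega) : OG := w.
Lemma idG_meas : measurable_fun [set: Omega] idG.
Proof.
apply: (measurability _ OG_mE') => //.
move=> _ [E [[m k] [/= m0 km] sE] <-]; rewrite setTI.
refine (sigmaX_meas (Zs m k) E (HZs m k m0 km) sE).
Qed.

Lemma G_meas A : sigma_all M Zs A -> measurable A.
Proof. by move=> hA; have := idG_meas measurableT A hA; rewrite setTI. Qed.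

HB.instance Definition _ := isMeasurableFun.Build _ _ _ _ idG idG_meas.
Definition ZB (w : Omega) : RB := Z w.
Lemma ZB_meas : measurable_fun [set: Omega] ZB. Proof. exact: rv_meas Z HZ. Qed.
HB.instance Definition _ := isMeasurableFun.Build _ _ _ _ ZB ZB_meas.
Definition pZ (w : Omega) : OG * RB := (idG w, ZB w).
Lemma pZ_meas : measurable_fun [set: Omega] pZ.
Proof. exact: measurable_fun_pair idG_meas ZB_meas. Qed.
HB.instance Definition _ := isMeasurableFun.Build _ _ _ _ pZ pZ_meas.

Definition PG := distribution P idG.
Definition nu := distribution P ZB.
Definition mZ := distribution P pZ.
Lemma in_bigcapI (T : Type) (I : eqType) (s : seq I) (A : I -> set T) x :
  (\big[setI/setT]_(i <- s) A i) x <-> (forall i, i \in s -> A i x).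
Proof.
elim: s => [|a s IH]; first by rewrite big_nil; split.
rewrite big_cons; split.
- move=> [Ax /IH H] i; rewrite in_cons => /orP[/eqP ->//|]; exact: H.
- move=> H; split; first by apply: H; rewrite mem_head.
  by apply/IH => i si; apply: H; rewrite in_cons si orbT.
Qed.

Lemma sigmaXT (X : Omega -> 'rV[R]_d) : sigmaX X setT.
Proof. by exists setT; [exact: (@measurableT _ RB)|rewrite preimage_setT]. Qed.

Lemma sigmaXI (X : Omega -> 'rV[R]_d) E F : sigmaX X E -> sigmaX X F -> sigmaX X (E `&` F).
Proof.
move=> [A bA ->] [B bB ->]; exists (A `&` B); last by rewrite preimage_setI.
exact: (@measurableI _ RB).
Qed.

Definition good_idx (i : nat * nat) := (0 < i.1)%N /\ (i.2 < M i.1)%N.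

Definition Pi : set (set Omega) := [set E | exists (s : seq (nat * nat)) (A : nat * nat -> set Omega),
  [/\ uniq s, (forall i, i \in s -> good_idx i /\ sigmaX (Zs i.1 i.2) (A i)) &
      E = \big[setI/setT]_(i <- s) A i]].

Lemma Pi_setI : setI_closed Pi.
Proof.
move=> _ _ [s1 [A1 [u1 h1 ->]]] [s2 [A2 [u2 h2 ->]]].
exists (undup (s1 ++ s2)), (fun i => (if i \in s1 then A1 i else setT) `&` (if i \in s2 then A2 i else setT)).
split; first exact: undup_uniq.
- move=> i; rewrite mem_undup mem_cat => /orP[is1|is2].
    have [g1 s1i] := h1 i is1; split => //; apply: sigmaXI; first by rewrite is1.
    by case: ifP => [/h2 []//|_]; exact: sigmaXT.
  have [g2 s2i] := h2 i is2; split => //; apply: sigmaXI; last by rewrite is2.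
  by case: ifP => [/h1 []//|_]; exact: sigmaXT.
- apply/seteqP; split => x.
  + move=> [/in_bigcapI H1 /in_bigcapI H2]; apply/in_bigcapI => i.
    rewrite mem_undup mem_cat => _; split.
      by case: ifP => // /H1.
    by case: ifP => // /H2.
  + move=> /in_bigcapI H; split; apply/in_bigcapI => i si.
      by have := H i; rewrite mem_undup mem_cat si /= => /(_ isT) [].
    by have := H i; rewrite mem_undup mem_cat si orbT => /(_ isT) [].
Qed.

Lemma Gen_Pi : Gen `<=` Pi.
Proof.
move=> E [i gi sE]; exists [:: i], (fun _ => E); split => //.
  by move=> j; rewrite mem_seq1 => /eqP ->.
by rewrite big_seq1.
Qed.

Lemma Pi_Gen : Pi `<=` <<s Gen >>.
Proof.
move=> _ [s [A [_ h ->]]].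
have : forall i, i \in s -> <<s Gen >> (A i).
  move=> i /h [gi sA]; apply: sub_sigma_algebra; by exists i.
elim: s {h} => [|a s IH] H; first by rewrite big_nil; exact: (@measurableT _ OG).
rewrite big_cons; apply: (@measurableI _ OG).
  by apply: H; rewrite mem_head.
by apply: IH => i si; apply: H; rewrite in_cons si orbT.
Qed.

Lemma OG_mPi : @measurable _ OG = <<s Pi >>.
Proof.
apply/seteqP; split.
  apply: smallest_sub; first exact: smallest_sigma_algebra.
  by move=> E /Gen_Pi; exact: sub_sigma_algebra.
apply: smallest_sub; first exact: smallest_sigma_algebra.
exact: Pi_Gen.
Qed.
Local Open Scope ereal_scope.

Lemma Pfin (A : set Omega) : measurable A -> P A = (fine (P A))%:E.
Proof. by move=> mA; rewrite fineK // fin_num_measure. Qed.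

Lemma ZB_pre_meas (B : set 'rV[R]_d) : borel_rV B -> measurable (Z @^-1` B).
Proof. by move=> bB; apply: (sigmaX_meas Z) => //; exists B. Qed.

Lemma indep_Pi (B : set 'rV[R]_d) : borel_rV B -> forall E, Pi E ->
  P (E `&` Z @^-1` B) = P E * P (Z @^-1` B).
Proof.
move=> bB _ [s [A [us hs ->]]].
pose F (o : option (nat * nat)) := match o with None => Z @^-1` B | Some i => A i end.
have HF : forall s', uniq s' -> {subset s' <= s} ->
    P (\big[setI/setT]_(j <- map Some s') F j) = \prod_(j <- map Some s') P (F j).
  move=> s' us' ss'; apply: Hind.
  - by rewrite map_inj_uniq //; move=> ? ? [].
  - move=> o /mapP [i /ss' /hs [gi _] ->]; rewrite in_setE /=; case: i gi => //.
  - move=> o /mapP [i /ss' /hs [_ si] ->] /=; case: i si => //.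
have H1 := HF s us (fun _ h => h).
have H2 : P (\big[setI/setT]_(j <- None :: map Some s) F j) = \prod_(j <- None :: map Some s) P (F j).
  apply: Hind.
  - rewrite /= map_inj_uniq ?us ?andbT; last by move=> ? ? [].
    by apply/mapP => -[].
  - move=> o; rewrite in_cons => /orP[/eqP -> |/mapP [i /hs [gi _] ->]]; rewrite in_setE //=.
    by case: i gi.
  - move=> o; rewrite in_cons => /orP[/eqP -> /=|/mapP [i /hs [_ si] ->] /=].
      by exists B.
    by case: i si.
rewrite big_cons big_map /= in H2; rewrite big_cons big_map /= in H2.
rewrite big_map /= in H1; rewrite big_map /= in H1.
by rewrite setIC H2 -H1 muleC.
Qed.
Lemma compl_step (S C : set Omega) : measurable S -> measurable C ->
  P (S `&` C) = P S * P C -> P (~` S `&` C) = P (~` S) * P C.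
Proof.
move=> mS mC hS.
have e1 : P (~` S `&` C) = P C - P (S `&` C).
  rewrite (_ : ~` S `&` C = C `\` S); last by rewrite setDE setIC.
  rewrite (_ : S `&` C = C `&` S); last by rewrite setIC.
  apply: measureD => //; rewrite ltey_eq; apply/orP; left; exact: fin_num_measure.
have e2 : P (~` S) = 1 - P S by exact: probability_setC.
rewrite e1 e2 hS.
by rewrite (Pfin _ mS) (Pfin _ mC) -!EFinM -!EFinB; congr EFin; ring.
Qed.

Lemma union_step (F : (set Omega)^nat) (C : set Omega) :
  (forall n, measurable (F n)) -> trivIset setT F -> measurable C ->
  (forall n, P (F n `&` C) = P (F n) * P C) ->
  P (\bigcup_k F k `&` C) = P (\bigcup_k F k) * P C.
Proof.
move=> mF tF mC hF.
have e1 : P (\bigcup_k (F k `&` C)) = \sum_(i <oo | i \in setT) P (F i `&` C).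
  apply: measure_bigcup; last exact: trivIset_setIr.
  by move=> i _; apply: measurableI.
have e2 : P (\bigcup_k F k) = \sum_(i <oo | i \in setT) P (F i).
  by apply: measure_bigcup.
rewrite setI_bigcupl e1 e2.
have hF' : forall i, P (F i `&` C) = (fine (P C))%:E * P (F i).
  by move=> i; rewrite hF -(Pfin _ mC) muleC.
under eq_eseriesr do rewrite hF'.
rewrite nneseriesZl; last by move=> i _; exact: measure_ge0.
by rewrite muleC -(Pfin _ mC).
Qed.

Lemma indep_G (B : set 'rV[R]_d) : borel_rV B -> forall E, sigma_all M Zs E ->
  P (E `&` Z @^-1` B) = P E * P (Z @^-1` B).
Proof.
move=> bB E hE.
have mZB := ZB_pre_meas B bB.
apply: (@dynkin_induction _ OG Pi (fun S : set OG => P (@setI Omega S (Z @^-1` B)) = P S * P (Z @^-1` B)) OG_mPi Pi_setI _ _ _ _ E) => //.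
- by rewrite setTI probability_setT mul1e.
- exact: indep_Pi.
- move=> S mS hS; exact: (compl_step S _ (G_meas S mS) mZB hS).
- move=> F mF tF hF; exact: (union_step F _ (fun n => G_meas (F n) (mF n)) tF mZB hF).
- by rewrite -OG_mPi.
Qed.

Lemma prod_mZ (X : set (OG * RB)) : measurable X -> (PG \x nu) X = mZ X.
Proof.
apply: product_measure_unique => A B mA mB.
have := indep_G B mB A mA.
rewrite /mZ /PG /nu /distribution /pushforward /=.
by move=> <-.
Qed.

Lemma fubini_key (f : Omega -> 'rV[R]_d -> R) :
  measurable_fun [set: OG * RB] (fun p : OG * RB => (f p.1 p.2)%:E) ->
  P.-integrable setT (fun w => (f w (Z w))%:E) ->
  [/\ measurable_fun [set: OG] (fun w : OG => \int[nu]_y (f w y)%:E),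
      PG.-integrable setT (fun w : OG => \int[nu]_y (f w y)%:E) &
      forall A : set OG, measurable A ->
        \int[P]_(w in A) (f w (Z w))%:E = \int[PG]_(w in A) \int[nu]_y (f w y)%:E].
Proof.
move=> mF iF.
pose F := fun p : OG * RB => (f p.1 p.2)%:E.
have iFmZ : mZ.-integrable setT F.
  apply: (integrable_pushforward pZ_meas) => //.
have iFp : (PG \x nu).-integrable setT F.
  apply/integrableP; split => //.
  rewrite (eq_measure_integral mZ); last by move=> A mA _; exact: prod_mZ.
  by case/integrableP : iFmZ.
split.
- exact: (measurable_fubini_F iFp).
- exact: (integrable_fubini_F iFp).
move=> A mA.
pose FA := F \_ (A `*` setT).
have mAT : measurable (A `*` [set: RB]) by exact: measurableX.
have iFA : (PG \x nu).-integrable setT FA.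
  by apply/(integrable_mkcond _ mAT); apply: integrableS iFp.
rewrite [RHS]integral_mkcond.
have -> : (fun w : OG => \int[nu]_y (f w y)%:E) \_ A = fubini_F nu FA.
  apply/funext => w; rewrite /patch /fubini_F /FA /patch.
  case: (boolP (w \in A)) => wA.
    by apply: eq_integral => y _; rewrite ifT //; apply/mem_set; split => //; exact/set_mem.
  rewrite (eq_integral (cst 0)) ?integral0 // => y _; rewrite ifF //.
  by apply/negP => /set_mem [Aw _]; move: wA; rewrite (mem_set Aw).
rewrite (integral12_prod_meas1 iFA) -integral_mkcond.
rewrite (eq_measure_integral mZ); last by move=> X mX _; exact: prod_mZ.
have hpre : pZ @^-1` (A `*` [set: RB]) = A.
  by apply/seteqP; split => w /=; [case|].
rewrite integral_pushforward //; last first.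
  by rewrite hpre; apply: (integrableS measurableT) => //; exact: G_meas.
by rewrite hpre.
Qed.
Local Close Scope ereal_scope.
Hypothesis HEZ : P.-integrable setT (fun w => (enorm (Z w))%:E).

Lemma lip1_neg (h : 'rV[R]_d -> R) : lip1 h -> lip1 (fun z => - h z).
Proof. by move=> lh z y; rewrite -opprD normrN; exact: lh. Qed.

Lemma lip1_int (h : 'rV[R]_d -> R) : lip1 h -> P.-integrable setT (fun v => (h (Z v))%:E).
Proof.
move=> lh.
apply: (@le_integrable _ _ _ P setT measurableT _ (fun v => (`|h 0| + enorm (Z v))%:E)).
- apply/measurable_EFinP; apply: (measurableT_comp (lip1_meas h lh)); exact: ZB_meas.
- move=> v _; rewrite !abse_EFin lee_fin [X in _ <= X]ger0_norm ?addr_ge0 ?enorm_ge0 //.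
  have := lh (Z v) 0; rewrite subr0 => H.
  have := ler_normD (h (Z v) - h 0) (h 0); rewrite subrK; lra.
- under eq_fun do rewrite EFinD.
  apply: integrableD => //; exact: finite_measure_integrable_cst.
Qed.

Definition Ex (h : 'rV[R]_d -> R) : R := fine (\int[P]_v (h (Z v))%:E)%E.

Lemma Ex_E h : lip1 h -> (\int[P]_v (h (Z v))%:E = (Ex h)%:E)%E.
Proof. by move=> lh; rewrite fineK //; exact: integrable_fin_num (lip1_int h lh). Qed.

Lemma Ex_mono h1 h2 e : lip1 h1 -> lip1 h2 -> (forall z, h1 z - e <= h2 z) ->
  Ex h1 - e <= Ex h2.
Proof.
move=> l1 l2 H; rewrite -lee_fin -Ex_E // EFinB -Ex_E //.
have ic : P.-integrable setT (EFin \o (fun _ : Omega => e)) by exact: finite_measure_integrable_cst.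
have -> : (e%:E = \int[P]_v ((fun _ : Omega => e) v)%:E)%E.
  rewrite integral_cst // [X in (_ * X)%E](_ : _ = 1%E) ?mule1 //; exact: probability_setT.
rewrite -(integralB_EFin measurableT (lip1_int h1 l1) ic).
apply: le_integral => //.
  by apply: integrableB => //; exact: lip1_int.
  exact: lip1_int.
by move=> v _; rewrite -EFinB lee_fin.
Qed.

Lemma Ex_neg h : lip1 h -> Ex (fun z => - h z) = - Ex h.
Proof.
move=> lh.
have ic : P.-integrable setT (EFin \o (fun _ : Omega => 0)) by exact: finite_measure_integrable_cst.
have e := integralB_EFin measurableT ic (lip1_int h lh).
rewrite integral_cst // mul0e sub0e Ex_E // in e.
rewrite /Ex (_ : (fun v => (- h (Z v))%:E) = (fun v => ((fun _ : Omega => 0) v)%:E - (h (Z v))%:E)%E).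
  by rewrite e.
by apply/funext => v; rewrite /= -EFinB sub0r.
Qed.
Variable n : nat.

Lemma prod_sigma_meas (f : Omega -> 'rV[R]_d -> R) :
  (forall B : set R, measurable B -> prod_sigma (sigma_all M Zs) ((fun p => f p.1 p.2) @^-1` B)) ->
  measurable_fun [set: OG * RB] (fun p : OG * RB => (f p.1 p.2)%:E).
Proof.
move=> hf; apply/(measurable_EFinP [set: OG * RB] (fun p : OG * RB => f p.1 p.2)).
move=> _ B mB; rewrite setTI.
have sub : prod_sigma (sigma_all M Zs) `<=` @measurable _ (OG * RB)%type.
  apply: smallest_sub; first exact: sigma_algebra_measurable.
  move=> _ [A [B' [hA hB ->]]]; exact: measurableX.
exact: (sub _ (hf B mB)).
Qed.

Lemma version_ae (f : Omega -> 'rV[R]_d -> R) (Y : Omega -> R) :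
  measurable_fun [set: OG * RB] (fun p : OG * RB => (f p.1 p.2)%:E) ->
  cond_exp_version P (sigma_all M Zs) (fun w => f w (Z w)) Y ->
  {ae P, forall w, (Y w)%:E = (\int[nu]_y (f w y)%:E)%E}.
Proof.
move=> mF [iF mY iY hY].
have [mPhi iPhi key] := fubini_key f mF iF.
have mY' : measurable_fun [set: OG] (fun w : OG => (Y w)%:E).
  apply/(measurable_EFinP [set: OG] (Y : OG -> R)) => _ B mB; rewrite setTI; exact: mY.
have ae : ae_eq PG setT (fun w : OG => (\int[nu]_y (f w y)%:E)%E) (fun w : OG => (Y w)%:E).
  apply: integral_ae_eq => // E _ mE.
  rewrite -key //.
  transitivity (\int[P]_(w in E) (Y w)%:E)%E; first by rewrite hY.
  rewrite /PG /distribution integral_pushforward //.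
  exact: (integrableS measurableT (G_meas E mE) (@subsetT _ _) iY).
case: ae => N [mN PN0 sub]; exists N; split.
- exact: G_meas.
- exact: PN0.
- by move=> w /= nw; apply: sub => /= h; apply: nw; symmetry; exact: h.
Qed.

Definition Dsup (w : Omega) : \bar R := ereal_sup [set x | exists g, lip1 g /\
        x = `|(\int[P]_v (g (Z v))%:E - (emp_mean M Zs n (fun _ => g) w)%:E)|%E].

Lemma nu_int (g : 'rV[R]_d -> R) : lip1 g -> (\int[nu]_y (g y)%:E = (Ex g)%:E)%E.
Proof.
move=> lg; rewrite -Ex_E // /nu /distribution integral_pushforward //.
- by apply/(measurable_EFinP [set: RB] (g : RB -> R)); exact: lip1_meas.
- by rewrite preimage_setT; exact: lip1_int.
Qed.

Lemma part1 (f : Omega -> 'rV[R]_d -> R) (Y : Omega -> R) :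
  admissible_rf P (sigma_all M Zs) f ->
  cond_exp_version P (sigma_all M Zs) (fun w => f w (Z w)) Y ->
  {ae P, forall w, ((`|Y w - emp_mean M Zs n f w|)%:E <= Dsup w)%E}.
Proof.
move=> [hf hl] hc.
have mF := prod_sigma_meas f hf.
have hv := version_ae f Y mF hc.
apply: filterS2 hv hl => w e lw.
apply: ereal_sup_ubound; exists (f w); split => //.
rewrite Ex_E //.
move: e; rewrite nu_int // => -[->].
by rewrite -EFinB.
Qed.
Lemma ae_count (I : countType) (Q : I -> Omega -> Prop) :
  (forall i, {ae P, forall w, Q i w}) -> {ae P, forall w, forall i, Q i w}.
Proof.
move=> H.
have H' : {ae P, forall w k, (fun k w => match unpickle k with Some i => Q i w | None => True end) k w}.
  apply: ae_foralln => k; case: (unpickle k) => [i|]; [exact: H|exact: aeW].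
apply: (filterS _ H') => w Hw i; have := Hw (pickle i); by rewrite pickleK.
Qed.

Definition Xi (i : @Idx d) (w : Omega) : \bar R :=
  (`|Ex (gfam i) - emp_mean M Zs n (fun _ => gfam i) w|)%:E.

Definition Xset : set (Omega -> \bar R) :=
    [set X | exists f Y, [/\ admissible_rf P (sigma_all M Zs) f,
        cond_exp_version P (sigma_all M Zs) (fun w => f w (Z w)) Y &
        X = (fun w => (`|Y w - emp_mean M Zs n f w|)%:E)]].

Lemma Xi_in i : Xset (Xi i).
Proof.
exists (fun _ => gfam i), (fun _ => Ex (gfam i)); split => //.
- split.
  + move=> B mB.
    have -> : (fun p : Omega * 'rV[R]_d => gfam i p.2) @^-1` B = setT `*` (gfam i @^-1` B).
      by apply/seteqP; split => -[w z] /=; [move=> h; split|case].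
    apply: sub_sigma_algebra; exists setT, (gfam i @^-1` B); split => //.
      exact: (@measurableT _ OG).
    by have := gfam_meas i measurableT B mB; rewrite setTI.
  + by apply: aeW => w; exact: gfam_lip.
- split.
  + exact: lip1_int _ (gfam_lip i).
  + move=> B mB; rewrite preimage_cst; case: ifP => _.
      exact: (@measurableT _ OG).
    exact: (@measurable0 _ OG).
  + exact: finite_measure_integrable_cst.
  + move=> A hA.
    have mF : measurable_fun [set: OG * RB] (fun p : OG * RB => (gfam i p.2)%:E).
      apply/(measurable_EFinP [set: OG * RB] (fun p : OG * RB => gfam i p.2)).
      exact: measurableT_comp (gfam_meas i) measurable_snd.
    have [_ _ key] := fubini_key (fun _ => gfam i) mF (lip1_int _ (gfam_lip i)).
    rewrite key //.
    rewrite nu_int; last exact: gfam_lip.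
    rewrite integral_cst; last exact: G_meas.
    by rewrite integral_cst.
Qed.
Lemma mean_le (h1 h2 : 'rV[R]_d -> R) (w : Omega) (c : R) :
  (forall k : 'I_(M n), h1 (Zs n k w) <= h2 (Zs n k w) + c) ->
  emp_mean M Zs n (fun _ => h1) w <= emp_mean M Zs n (fun _ => h2) w + c.
Proof.
move=> H; rewrite /emp_mean.
have m0 : (0 : R) < (M n)%:R by rewrite ltr0n HM.
have hs : \sum_(k < M n) h1 (Zs n k w) <= \sum_(k < M n) (h2 (Zs n k w) + c).
  by apply: ler_sum => k _; exact: H.
apply: le_trans (ler_wpM2l _ hs) _; first by rewrite invr_ge0 ltW.
have ec : (M n)%:R^-1 * (c *+ M n) = c.
  by rewrite -[c *+ _]mulr_natr mulrC mulfK // gt_eqF.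
by rewrite big_split /= sumr_const card_ord mulrDr ec.
Qed.

Lemma mean_neg (h : 'rV[R]_d -> R) (w : Omega) :
  emp_mean M Zs n (fun _ => fun z => - h z) w = - emp_mean M Zs n (fun _ => h) w.
Proof. by rewrite /emp_mean sumrN mulrN. Qed.

Lemma claim (h : 'rV[R]_d -> R) (w : Omega) (U : Omega -> \bar R) (e : R) :
  (forall i, (Xi i w <= U w)%E) -> lip1 h -> 0 < e ->
  ((Ex h - emp_mean M Zs n (fun _ => h) w - 4 * e)%:E <= U w)%E.
Proof.
move=> Hw lh e0.
have [i [lo up]] := family_approx h (M n) (fun k => Zs n k w) e lh (HM n) e0.
apply: le_trans (Hw i); rewrite /Xi lee_fin.
have h1 := Ex_mono h (gfam i) e lh (gfam_lip i) lo.
have h2 := mean_le (gfam i) h w (3 * e) up.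
apply: le_trans (ler_norm _); lra.
Qed.

Lemma part2 (U : Omega -> \bar R) :
  (forall X, Xset X -> {ae P, forall w, (X w <= U w)%E}) ->
  {ae P, forall w, (Dsup w <= U w)%E}.
Proof.
move=> hU.
have h := ae_count _ (fun i w => (Xi i w <= U w)%E) (fun i => hU _ (Xi_in i)).
apply: (filterS _ h) => w Hw.
apply: ge_ereal_sup => _ [g [lg ->]].
rewrite Ex_E // -EFinB abse_EFin.
apply/lee_addgt0Pr => e e0.
have e40 : 0 < e / 4 by rewrite divr_gt0.
rewrite -leeBlDr // -EFinB.
have [hp|hn] := lerP 0 (Ex g - emp_mean M Zs n (fun _ => g) w).
- rewrite ger0_norm //.
  have := claim g w U (e / 4) Hw lg e40.
  by rewrite (_ : 4 * (e / 4) = e) //; field.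
- rewrite ltr0_norm //.
  have := claim (fun z => - g z) w U (e / 4) Hw (lip1_neg g lg) e40.
  rewrite Ex_neg // mean_neg (_ : 4 * (e / 4) = e); last by field.
  by move=> H; apply: le_trans H; rewrite lee_fin; lra.
Qed.
End main.

Theorem lemma2 (R : realType) (dT : measure_display) (Omega : measurableType dT)
  (P : probability Omega R) (d : nat) (M : nat -> nat)
  (Z : Omega -> 'rV[R]_d) (Zs : nat -> nat -> Omega -> 'rV[R]_d) (n : nat) :
  (forall m, (0 < M m)%N) ->
  random_vec Z ->
  (forall m k, (0 < m)%N -> (k < M m)%N -> random_vec (Zs m k)) ->
  (forall m k, (0 < m)%N -> (k < M m)%N ->
     forall A, borel_rV A -> P (Zs m k @^-1` A) = P (Z @^-1` A)) ->
  mutual_indep P (zfamily Z Zs) (valid_idx M) ->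
  P.-integrable setT (fun w => (enorm (Z w))%:E) ->
  (0 < n)%N ->
  is_ess_sup P
    [set X | exists f Y, [/\ admissible_rf P (sigma_all M Zs) f,
        cond_exp_version P (sigma_all M Zs) (fun w => f w (Z w)) Y &
        X = (fun w => (`|Y w - emp_mean M Zs n f w|)%:E)]]
    (fun w => ereal_sup [set x | exists g, lip1 g /\
        x = `|(\int[P]_v (g (Z v))%:E - (emp_mean M Zs n (fun _ => g) w)%:E)|%E]).
Proof.
move=> HM HZ HZs _ Hind HEZ _; split.
- move=> X [f [Y [hf hc ->]]].
  exact: (part1 P M Z Zs HZ HZs Hind HEZ n f Y hf hc).
- move=> U hU; exact: (part2 P M Z Zs HM HZ HZs Hind HEZ n U hU).
Qed.
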